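(* For every Molholes term $t$ and every list of resources $l=[l_0,\dots,l_{|l|-1}]$ (with types making the terms well-typed), \[\mathsf{First}\,(\mathit{seq}^{G}_{l}(l,t))\equiv\mathit{seq}^{G}_{l}(l,\mathit{perm}_l(|l|,\mathsf{First}\,t)),\qquad \mathsf{First}\,(\mathit{seq}^{S}_{r}(l,t))\equiv\mathit{seq}^{S}_{r}(l,\mathit{perm}_r(|l|,\mathsf{First}\,t)).\]
   Context: Host types are sets with products; $\mathit{perm}=\lambda((x,y),z).((x,z),y)$. Molholes terms: $\mathsf{Arr}\,f:\mathsf{RSF}\,A\,B$, $\mathsf{Comp}\,t_1\,t_2$ (written $t_1\ggg t_2$, left-associative unless parenthesised), $\mathsf{First}\,t:\mathsf{RSF}(A\times C)(B\times C)$, $\mathsf{Get}\,r:\mathsf{RSF}\,A(A\times B)$, $\mathsf{Set}\,r:\mathsf{RSF}(A\times B)A$ ($r=\mathsf{Ref}\,B\,n$ a resource). Notations: $\mathit{stack}(n,t)=\mathsf{First}(\cdots(\mathsf{First}\,t)\cdots)$ with $n$ applications of $\mathsf{First}$; $\mathit{perm}_l(n,t)=\mathit{stack}(n-1,\mathsf{Arr}\,\mathit{perm})\ggg\cdots\ggg\mathit{stack}(0,\mathsf{Arr}\,\mathit{perm})\ggg t$; $\mathit{perm}_r(n,t)=t\ggg\mathit{stack}(0,\mathsf{Arr}\,\mathit{perm})\ggg\cdots\ggg\mathit{stack}(n-1,\mathsf{Arr}\,\mathit{perm})$; $\mathit{seq}^G_l(l,t)=\mathsf{Get}\,l_0\ggg(\cdots\ggg(\mathsf{Get}\,l_{|l|-1}\ggg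 t)\cdots)$; $\mathit{seq}^S_r(l,t)=t\ggg\mathsf{Set}\,l_{|l|-1}\ggg\cdots\ggg\mathsf{Set}\,l_0$. Semantics: a memory is a partial map from $\mathbb N$ to cells $\mathsf{Cell}(s,\tau)\,x$ ($s\in\{\mathsf{Internal},\mathsf{Input}\,b,\mathsf{Output}\,b\}$, $x$ a value of $\tau$ or $\mathsf{undef}$). For $r=\mathsf{Ref}\,A\,n$: $\mathrm{read}\,r\,\sigma=(x,\sigma)$ if $\sigma n=\mathsf{Cell}(\mathsf{Internal},A)x$; $=(x,\sigma[n\mapsto\mathsf{Cell}(\mathsf{Input}\,\mathrm{false},A)\mathsf{undef}])$ if $\sigma n=\mathsf{Cell}(\mathsf{Input}\,\mathrm{true},A)x$; else undefined. $\mathrm{write}\,r\,\sigma\,v=\sigma[n\mapsto\mathsf{Cell}(\mathsf{Internal},A)v]$ if $\sigma n=\mathsf{Cell}(\mathsf{Internal},A)x$; $=\sigma[n\mapsto\mathsf{Cell}(\mathsf{Output}\,\mathrm{false},A)v]$ if $\sigma n=\mathsf{Cell}(\mathsf{Output}\,\mathrm{true},A)\mathsf{undef}$; else undefined. $\mathrm{step}\,t:A\to(\text{memory}\rightharpoonup B\times\text{memory})$: $\mathsf{Arr}\,f\mapsto\lambda x\sigma.(fx,\sigma)$; $\mathsf{Comp}\,t_1t_2\mapsto\lambda x\sigma.\mathrm{step}\,t_2\,y\,\sigma'$ with $(y,\sigma')=\mathrm{step}\,t_1\,x\,\sigma$; $\mathsf{First}\,t\mapsto\lambda(x,c)\sigma.((y,c),\sigma')$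 with $(y,\sigma')=\mathrm{step}\,t\,x\,\sigma$; $\mathsf{Get}\,r\mapsto\lambda x\sigma.((x,y),\sigma')$ with $(y,\sigma')=\mathrm{read}\,r\,\sigma$; $\mathsf{Set}\,r\mapsto\lambda(x,y)\sigma.(x,\mathrm{write}\,r\,\sigma\,y)$ (all partial). $t\equiv t'$ iff $\mathrm{step}\,t=\mathrm{step}\,t'$ as partial functions. *)

(* Defs.v *)
From Stdlib Require Import List Bool Arith.
Import ListNotations.
Set Implicit Arguments.

Definition perm {X Y Z : Type} (p : (X * Y) * Z) : (X * Z) * Y :=
  let '((x, y), z) := p in ((x, z), y).

Inductive ref (B : Type) : Type := Ref : nat -> ref B.
Arguments Ref {B} _.
Definition addr {B} (r : ref B) : nat := let 'Ref n := r in n.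

Inductive rsf : Type -> Type -> Type :=
| Arr  : forall A B, (A -> B) -> rsf A B
| Comp : forall A B C, rsf A B -> rsf B C -> rsf A C
| First : forall A B C, rsf A B -> rsf (A * C) (B * C)
| Get  : forall A B, ref B -> rsf A (A * B)
| RSet : forall A B, ref B -> rsf (A * B) A.
Arguments Arr {A B} _.
Arguments Comp {A B C} _ _.
Arguments First {A B C} _.
Arguments Get {A B} _.
Arguments RSet {A B} _.

(* Memories: partial maps from nat to cells; undef is [None]. *)
Inductive status := Internal | Input (b : bool) | Output (b : bool).
Record cell := Cell { cstatus : status; cty : Type; cval : option cty }.
Arguments Cell : clear implicits.
Definition mem := nat -> option cell.
Definition upd (s : mem) (n : nat) (c : cell) : mem :=
  fun m => if Nat.eqb m n then Some c else s m.

(* read r s = (x, s') as a relation (read is a partial function). *)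
Inductive read {A : Type} (r : ref A) (s : mem) : A -> mem -> Prop :=
| read_internal : forall x,
    s (addr r) = Some (Cell Internal A (Some x)) -> read r s x s
| read_input : forall x,
    s (addr r) = Some (Cell (Input true) A (Some x)) ->
    read r s x (upd s (addr r) (Cell (Input false) A None)).

(* write r s v = s' as a relation (write is a partial function). *)
Inductive write {A : Type} (r : ref A) (s : mem) (v : A) : mem -> Prop :=
| write_internal : forall x,
    s (addr r) = Some (Cell Internal A x) ->
    write r s v (upd s (addr r) (Cell Internal A (Some v)))
| write_output :
    s (addr r) = Some (Cell (Output true) A None) ->
    write r s v (upd s (addr r) (Cell (Output false) A (Some v))).

(* The graph of the partial function step t : A -> mem -> B * mem. *)
Inductive step : forall A B, rsf A B -> A -> mem -> B -> mem -> Prop :=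
| step_arr : forall A B (f : A -> B) x s, step (Arr f) x s (f x) s
| step_comp : forall A B C (t1 : rsf A B) (t2 : rsf B C) x s y s1 z s2,
    step t1 x s y s1 -> step t2 y s1 z s2 -> step (Comp t1 t2) x s z s2
| step_first : forall A B C (t : rsf A B) x (c : C) s y s1,
    step t x s y s1 -> step (First t) (x, c) s (y, c) s1
| step_get : forall A B (r : ref B) (x : A) s y s1,
    read r s y s1 -> step (Get r) x s (x, y) s1
| step_set : forall A B (r : ref B) (x : A) (y : B) s s1,
    write r s y s1 -> step (RSet r) (x, y) s x s1.

Definition rsf_equiv {A B} (t t' : rsf A B) : Prop :=
  forall x s y s', step t x s y s' <-> step t' x s y s'.
Notation "t ≡ t'" := (rsf_equiv t t') (at level 70).

Definition res := {B : Type & ref B}.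
Definition tys (l : list res) : list Type := map (@projT1 Type ref) l.

(* prodR X [D_k; ...; D_1] = ((X * D_1) * ...) * D_k  (head = outermost). *)
Fixpoint prodR (X : Type) (Ds : list Type) : Type :=
  match Ds with [] => X | D :: Ds' => prodR X Ds' * D end.

(* seq^G_l(l,t) = Get l_0 >>> (... >>> (Get l_{|l|-1} >>> t)),
   computed on the reversed list (head = last resource). *)
Fixpoint seqG_rev {X Y : Type} (rs : list res) :
    rsf (prodR X (tys rs)) Y -> rsf X Y :=
  match rs as rs0 return rsf (prodR X (tys rs0)) Y -> rsf X Y with
  | [] => fun t => t
  | r :: rs' => fun t => seqG_rev rs' (Comp (Get (projT2 r)) t)
  end.
Definition seqG_l {X Y : Type} (l : list res)
  (t : rsf (prodR X (tys (rev l))) Y) : rsf X Y := seqG_rev (rev l) t.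

(* seq^S_r(l,t) = ((t >>> Set l_{|l|-1}) >>> ...) >>> Set l_0. *)
Fixpoint seqS_rev {X Y : Type} (rs : list res) :
    rsf X (prodR Y (tys rs)) -> rsf X Y :=
  match rs as rs0 return rsf X (prodR Y (tys rs0)) -> rsf X Y with
  | [] => fun t => t
  | r :: rs' => fun t => seqS_rev rs' (Comp t (RSet (projT2 r)))
  end.
Definition seqS_r {X Y : Type} (l : list res)
  (t : rsf X (prodR Y (tys (rev l)))) : rsf X Y := seqS_rev (rev l) t.

Fixpoint stack {X Y : Type} (Ds : list Type) (t : rsf X Y) :
    rsf (prodR X Ds) (prodR Y Ds) :=
  match Ds as Ds0 return rsf (prodR X Ds0) (prodR Y Ds0) with
  | [] => t
  | D :: Ds' => First (stack Ds' t)
  end.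

(* Left-associated chain
     (stack(n-1,Arr perm) >>> ... ) >>> stack(0,Arr perm)   (n = 1 + |Ds|)
   where every element is additionally wrapped by [w] (the wrapper
   accumulates the First's of the outer layers). *)
Fixpoint permL_chain (A C : Type) (F : Type -> Type)
    (w : forall X Y, rsf X Y -> rsf (F X) (F Y)) (D : Type) (Ds : list Type) :
    rsf (F (prodR (A * C) (D :: Ds))) (F (prodR A (D :: Ds) * C)%type) :=
  match Ds as Ds0
    return rsf (F (prodR (A * C) (D :: Ds0))) (F (prodR A (D :: Ds0) * C)%type) with
  | [] => w _ _ (Arr perm)
  | D' :: Ds' =>
      Comp (permL_chain A C (fun Z => F (Z * D)%type) (fun X Y f => w _ _ (First f)) D' Ds')
           (w _ _ (Arr perm))
  end.

(* perm_l(|Ds|, t) = stack(n-1,Arr perm) >>> ... >>> stack(0,Arr perm) >>> t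
   (left-associated; equal to t when n = 0). *)
Definition perm_l {A C Y : Type} (Ds : list Type) :
    rsf (prodR A Ds * C) Y -> rsf (prodR (A * C) Ds) Y :=
  match Ds as Ds0 return rsf (prodR A Ds0 * C) Y -> rsf (prodR (A * C) Ds0) Y with
  | [] => fun t => t
  | D :: Ds' => fun t => Comp (permL_chain A C (fun Z => Z) (fun X Y f => f) D Ds') t
  end.

(* perm_r(|Ds|, t) = t >>> stack(0,Arr perm) >>> ... >>> stack(n-1,Arr perm)
   (left-associated), with accumulator and wrapper. *)
Fixpoint perm_r_aux {X B C : Type} (F : Type -> Type)
    (w : forall X Y, rsf X Y -> rsf (F X) (F Y)) (Ds : list Type) :
    rsf X (F (prodR B Ds * C)%type) -> rsf X (F (prodR (B * C) Ds)) :=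
  match Ds as Ds0 return rsf X (F (prodR B Ds0 * C)%type) -> rsf X (F (prodR (B * C) Ds0)) with
  | [] => fun acc => acc
  | D :: Ds' => fun acc =>
      perm_r_aux (fun Z => F (Z * D)%type) (fun X Y f => w _ _ (First f)) Ds'
                 (Comp acc (w _ _ (Arr perm)))
  end.
Definition perm_r {X B C : Type} (Ds : list Type) (t : rsf X (prodR B Ds * C)) :
    rsf X (prodR (B * C) Ds) := perm_r_aux (fun Z => Z) (fun X Y f => f) Ds t.

(* Main.v *)
Require Import Defs.
From Stdlib Require Import List.
Import ListNotations.

Fixpoint den {A B} (t : rsf A B) : A -> mem -> B -> mem -> Prop :=
  match t in rsf A B return A -> mem -> B -> mem -> Prop with
  | Arr f => fun x s y s' => y = f x /\ s' = s
  | Comp t1 t2 => fun x s z s' => exists y s1, den t1 x s y s1 /\ den t2 y s1 z s'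
  | First t => fun x s q s' => exists y, den t (fst x) s y s' /\ q = (y, snd x)
  | Get r => fun x s q s' => fst q = x /\ read r s (snd q) s'
  | RSet r => fun p s y s' => y = fst p /\ write r s (snd p) s'
  end.

Lemma step_den A B (t : rsf A B) x s y s' : step t x s y s' <-> den t x s y s'.
Proof.
  split.
  - induction 1; simpl; eauto.
  - revert x s y s'; induction t; simpl.
    + intros x s y s' [-> ->]; constructor.
    + intros x s z s' (y&s1&H1&H2); econstructor; eauto.
    + intros [x c] s q s' (y&H&->); simpl; constructor; auto.
    + intros x s [x' y] s' [Hx H]; simpl in *; subst; constructor; auto.
    + intros [x y'] s y s' [Hx H]; simpl in *; subst; constructor; auto.
Qed.

Definition deq {A B} (t t' : rsf A B) := forall x s y s', den t x s y s' <-> den t' x s y s'.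

Lemma deq_refl {A B} (t : rsf A B) : deq t t. Proof. unfold deq; tauto. Qed.
Lemma deq_sym {A B} (t t' : rsf A B) : deq t t' -> deq t' t. Proof. unfold deq; intros H x s y s'; symmetry; apply H. Qed.
Lemma deq_trans {A B} (t t' t'' : rsf A B) : deq t t' -> deq t' t'' -> deq t t''.
Proof. unfold deq; intros H1 H2 x s y s'; rewrite H1; auto. Qed.
Lemma comp_congr {A B C} (a a' : rsf A B) (b b' : rsf B C) :
  deq a a' -> deq b b' -> deq (Comp a b) (Comp a' b').
Proof. unfold deq; simpl; intros H1 H2 x s y s'; split; intros (z&s1&Ha&Hb);
  exists z, s1; split; [apply H1|apply H2|apply H1|apply H2]; auto. Qed.
Lemma comp_assoc {A B C D} (a : rsf A B) (b : rsf B C) (c : rsf C D) :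
  deq (Comp (Comp a b) c) (Comp a (Comp b c)).
Proof. unfold deq; simpl; intros x s y s'; split.
  - intros (z&s1&(w&s2&H1&H2)&H3); eauto 10.
  - intros (z&s1&H1&(w&s2&H2&H3)); eauto 10. Qed.
Lemma first_congr {A B D} (a a' : rsf A B) : deq a a' -> deq (First (C:=D) a) (First a').
Proof. unfold deq; simpl; intros H x s y s'; split; intros (z&Hz&->); exists z; split; auto; apply H; auto. Qed.
Lemma first_comp {A B C D} (a : rsf A B) (b : rsf B C) :
  deq (Comp (First (C:=D) a) (First b)) (First (Comp a b)).
Proof. unfold deq; simpl; intros x s y s'; split.
  - intros (q&s1&(z&Hz&->)&(w&Hw&->)); simpl in *; eauto 10.
  - intros (z&(w&s1&Hw&Hz)&->); exists (w, snd x), s1; simpl; eauto 10. Qed.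
Lemma arr_ext {A B} (f g : A -> B) : (forall x, f x = g x) -> deq (Arr f) (Arr g).
Proof. unfold deq; simpl; intros H x s y s'; rewrite H; tauto. Qed.
Lemma arr_comp {A B C} (f : A -> B) (g : B -> C) :
  deq (Comp (Arr f) (Arr g)) (Arr (fun x => g (f x))).
Proof. unfold deq; simpl; intros x s y s'; split.
  - intros (z&s1&[H1 H2]&[H3 H4]); subst; auto.
  - intros [-> ->]; exists (f x), s; auto. Qed.
Lemma first_arr {A B D} (f : A -> B) :
  deq (First (C:=D) (Arr f)) (Arr (fun p => (f (fst p), snd p))).
Proof. unfold deq; simpl; intros x s y s'; split.
  - intros (z&[H1 H2]&H3); subst; auto.
  - intros [-> ->]; exists (f (fst x)); auto. Qed.
Lemma comp_id_l {A B} (a : rsf A B) : deq (Comp (Arr (fun x => x)) a) a.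
Proof. unfold deq; simpl; intros x s y s'; split.
  - intros (z&s1&[H1 H2]&H); subst; auto.
  - intros; exists x, s; auto. Qed.
Lemma comp_id_r {A B} (a : rsf A B) : deq (Comp a (Arr (fun x => x))) a.
Proof. unfold deq; simpl; intros x s y s'; split.
  - intros (z&s1&H&[H1 H2]); subst; auto.
  - intros; exists y, s'; auto. Qed.

Definition Wgood (F : Type -> Type) (w : forall X Y, rsf X Y -> rsf (F X) (F Y)) :=
  (forall X Y (a b : rsf X Y), deq a b -> deq (w X Y a) (w X Y b)) /\
  (forall X Y Z (a : rsf X Y) (b : rsf Y Z), deq (Comp (w _ _ a) (w _ _ b)) (w _ _ (Comp a b))) /\
  (forall X, deq (w X X (Arr (fun x => x))) (Arr (fun x => x))).

Lemma Wgood_id : Wgood (fun Z => Z) (fun X Y f => f).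
Proof. split; [|split]; intros; simpl; auto; apply deq_refl. Qed.

Lemma Wgood_first F w D : Wgood F w ->
  Wgood (fun Z => F (Z * D)%type) (fun X Y f => w _ _ (First (C:=D) f)).
Proof.
  intros (H1&H2&H3); split; [|split].
  - intros; apply H1, first_congr; auto.
  - intros. eapply deq_trans; [apply H2|]. apply H1, first_comp.
  - intros. eapply deq_trans; [|apply H3]. apply H1.
    eapply deq_trans; [apply first_arr|]. apply arr_ext. intros [a b]; reflexivity.
Qed.

Fixpoint pullC {A C} (Ds : list Type) : prodR (A * C) Ds -> (prodR A Ds * C)%type :=
  match Ds as Ds0 return prodR (A * C) Ds0 -> (prodR A Ds0 * C)%type with
  | [] => fun p => p
  | D :: Ds' => fun p => let q := pullC Ds' (fst p) in ((fst q, snd p), snd q)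
  end.
Fixpoint pushC {A C} (Ds : list Type) : prodR A Ds -> C -> prodR (A * C) Ds :=
  match Ds as Ds0 return prodR A Ds0 -> C -> prodR (A * C) Ds0 with
  | [] => fun v c => (v, c)
  | D :: Ds' => fun v c => (pushC Ds' (fst v) c, snd v)
  end.
Lemma pull_push {A C} Ds (v : prodR A Ds) (c : C) : pullC Ds (pushC Ds v c) = (v, c).
Proof. induction Ds; simpl; auto. destruct v; simpl. rewrite IHDs. reflexivity. Qed.

Lemma permL_lem A C Ds : forall F w D, Wgood F w ->
  deq (permL_chain A C F w D Ds) (w _ _ (Arr (pullC (A:=A) (C:=C) (D :: Ds)))).
Proof.
  induction Ds as [|D' Ds IH]; intros F w D HW; simpl.
  - apply (proj1 HW). apply arr_ext. intros [[x y] z]; reflexivity.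
  - pose proof (@Wgood_first F w D HW) as HW'.
    specialize (IH _ _ D' HW').
    eapply deq_trans; [apply comp_congr; [exact IH | apply deq_refl]|].
    eapply deq_trans; [apply (proj1 (proj2 HW))|].
    apply (proj1 HW).
    eapply deq_trans; [apply comp_congr; [apply first_arr | apply deq_refl]|].
    eapply deq_trans; [apply arr_comp|].
    apply arr_ext. intros [w0 d]; reflexivity.
Qed.

Lemma perm_l_lem A C Y Ds (u : rsf (prodR A Ds * C) Y) :
  deq (perm_l (A:=A) (C:=C) Ds u) (Comp (Arr (pullC Ds)) u).
Proof.
  destruct Ds as [|D Ds]; simpl.
  - apply deq_sym, comp_id_l.
  - apply comp_congr; [|apply deq_refl].
    apply (permL_lem A C Ds (fun Z => Z) (fun X Y f => f) D Wgood_id).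
Qed.

Definition pushC' {A C} Ds (p : (prodR A Ds * C)%type) : prodR (A * C) Ds :=
  pushC Ds (fst p) (snd p).

Lemma permR_lem X B C Ds : forall F w (acc : rsf X (F (prodR B Ds * C)%type)), Wgood F w ->
  deq (perm_r_aux (B:=B) (C:=C) F w Ds acc) (Comp acc (w _ _ (Arr (pushC' Ds)))).
Proof.
  induction Ds as [|D Ds IH]; intros F w acc HW; simpl.
  - apply deq_sym. eapply deq_trans; [apply comp_congr; [apply deq_refl| ]|apply comp_id_r].
    eapply deq_trans; [|apply (proj2 (proj2 HW))].
    apply (proj1 HW). apply arr_ext; intros [a b]; reflexivity.
  - pose proof (@Wgood_first F w D HW) as HW'.
    eapply deq_trans; [apply (IH _ _ _ HW')|].
    eapply deq_trans; [apply comp_assoc|].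
    apply comp_congr; [apply deq_refl|].
    eapply deq_trans; [apply (proj1 (proj2 HW))|].
    apply (proj1 HW).
    eapply deq_trans; [apply comp_congr; [apply deq_refl|apply first_arr]|].
    eapply deq_trans; [apply arr_comp|].
    apply arr_ext. intros [[v d] c]; reflexivity.
Qed.

Lemma perm_r_lem X B C Ds (t : rsf X (prodR B Ds * C)) :
  deq (perm_r Ds t) (Comp t (Arr (pushC' Ds))).
Proof. apply (permR_lem X B C Ds (fun Z => Z) (fun X Y f => f) t Wgood_id). Qed.

Fixpoint gets {X} (rs : list res) : X -> mem -> prodR X (tys rs) -> mem -> Prop :=
  match rs as rs0 return X -> mem -> prodR X (tys rs0) -> mem -> Prop with
  | [] => fun x s v s1 => v = x /\ s1 = s
  | r :: rs' => fun x s v s2 => exists s1, gets rs' x s (fst v) s1 /\ read (projT2 r) s1 (snd v) s2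
  end.

Lemma seqG_den X Y rs : forall (t : rsf (prodR X (tys rs)) Y) x s y s',
  den (seqG_rev rs t) x s y s' <-> exists v s1, gets rs x s v s1 /\ den t v s1 y s'.
Proof.
  induction rs as [|r rs IH]; intros t x s y s'; simpl.
  - split; [intros; exists x, s; auto | intros (v&s1&[-> ->]&H); auto].
  - rewrite IH. simpl. split.
    + intros (v&s1&Hg&q&s2&[Hq Hr]&Ht). exists q, s2. split; auto. exists s1; subst; auto.
    + intros (w&s2&(s1&Hg&Hr)&Ht). exists (fst w), s1. split; auto. exists w, s2. auto.
Qed.

Lemma gets_C A C rs : forall (x : A) (c : C) s w s1,
  gets rs (x, c) s w s1 <-> exists v, gets rs x s v s1 /\ w = pushC (tys rs) v c.
Proof.
  induction rs as [|r rs IH]; intros x c s w s1; simpl.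
  - split; [intros [-> ->]; eauto | intros (v&[-> ->]&->); auto].
  - split.
    + intros (s0&Hg&Hr). apply IH in Hg. destruct Hg as (v&Hg&Hv).
      exists (v, snd w). simpl. split; [eauto|]. destruct w; simpl in *; subst; auto.
    + intros (v&(s0&Hg&Hr)&->). simpl. exists s0. split; auto. apply IH. eauto.
Qed.

Fixpoint sets {Y} (rs : list res) : prodR Y (tys rs) -> mem -> Y -> mem -> Prop :=
  match rs as rs0 return prodR Y (tys rs0) -> mem -> Y -> mem -> Prop with
  | [] => fun v s y s' => y = v /\ s' = s
  | r :: rs' => fun v s y s2 => exists s1, write (projT2 r) s (snd v) s1 /\ sets rs' (fst v) s1 y s2
  end.

Lemma seqS_den X Y rs : forall (t : rsf X (prodR Y (tys rs))) x s y s',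
  den (seqS_rev rs t) x s y s' <-> exists v s1, den t x s v s1 /\ sets rs v s1 y s'.
Proof.
  induction rs as [|r rs IH]; intros t x s y s'; simpl.
  - split; [intros; exists y, s'; auto | intros (v&s1&H&[-> ->]); auto].
  - rewrite IH. simpl. split.
    + intros (v&s1&(q&s2&Ht&[Hq Hw])&Hs). exists q, s2. split; auto. exists s1; subst; auto.
    + intros (w&s2&Ht&(s1&Hw&Hs)). exists (fst w), s1. split; auto. exists w, s2. auto.
Qed.

Lemma sets_C B C rs : forall (v : prodR B (tys rs)) (c : C) s q s',
  sets rs (pushC (tys rs) v c) s q s' <-> exists y, sets rs v s y s' /\ q = (y, c).
Proof.
  induction rs as [|r rs IH]; intros v c s q s'; simpl.
  - split; [intros [-> ->]; eauto | intros (y&[-> ->]&->); auto].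
  - split.
    + intros (s1&Hw&Hs). apply IH in Hs. destruct Hs as (y&Hs&->). eauto.
    + intros (y&(s1&Hw&Hs)&->). exists s1. split; auto. apply IH. eauto.
Qed.

Lemma equiv_den {A B} (t t' : rsf A B) : deq t t' -> t ≡ t'.
Proof. intros H x s y s'. rewrite !step_den. apply H. Qed.

Theorem lemma8 (A B C : Type) (l : list res) :
  (forall t : rsf (prodR A (tys (rev l))) B,
      First (C := C) (seqG_l l t) ≡ seqG_l l (perm_l (tys (rev l)) (First t))) /\
  (forall t : rsf A (prodR B (tys (rev l))),
      First (C := C) (seqS_r l t) ≡ seqS_r l (perm_r (tys (rev l)) (First t))).
Proof.
  unfold seqG_l, seqS_r. generalize (rev l) as rs. intros rs. split; intros t; apply equiv_den;
  intros [x c] s q s'.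
  - simpl. split.
    + intros (y&Hy&->). simpl in *. apply seqG_den in Hy. destruct Hy as (v&s1&Hg&Ht).
      apply seqG_den.
      exists (pushC (tys rs) v c), s1. split; [apply gets_C; eauto|].
      apply perm_l_lem. simpl. exists (v, c), s1. rewrite pull_push. split; auto.
      exists y; auto.
    + intros H. apply seqG_den in H. destruct H as (w&s1&Hg&Hp).
      apply gets_C in Hg. destruct Hg as (v&Hg&->).
      apply perm_l_lem in Hp. simpl in Hp. destruct Hp as (z&s2&[Hz Hs]&y&Ht&->).
      subst. rewrite pull_push in *. simpl in *. exists y. split; auto.
      apply seqG_den. eauto.
  - simpl. split.
    + intros (y&Hy&->). simpl in *. apply seqS_den in Hy. destruct Hy as (v&s1&Ht&Hs).
      apply seqS_den.
      exists (pushC (tys rs) v c), s1. split.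
      * apply perm_r_lem. simpl. exists (v, c), s1. split; [exists v; auto|]. auto.
      * apply sets_C. eauto.
    + intros H. apply seqS_den in H. destruct H as (w&s1&Hp&Hs).
      apply perm_r_lem in Hp. simpl in Hp.
      destruct Hp as (z&s2&(v&Ht&->)&[-> ->]). unfold pushC' in Hs. simpl in Hs.
      apply sets_C in Hs. destruct Hs as (y&Hs&->). exists y. split; auto.
      apply seqS_den. eauto.
Qed.
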